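(* There exist graphs $G,H$ embedded in $\mathbb{R}^2$, each equipped with the height filtration, such that the FB-persistence diagrams of $G$ and $H$ differ, but the extended persistence diagrams of $G$ and $H$ coincide (in degrees $0$ and $1$).
   Context: Graphs are finite, undirected, possibly with multi-edges. For a graph embedded in $\mathbb{R}^2$, the height filtration is the vertex-based filtration function $f(v)=$ $y$-coordinate of $v$, $f(e)=\max(f(v),f(w))$ for $e=(v,w)$. For a filtration function $f$ with distinct values $a_0<\dots<a_n$, $G_{-1}=\emptyset$, $G_i=f^{-1}((-\infty,a_i])$; the intermediate complex $\mathrm{IC}_i(G,f)$ is the subgraph consisting of the vertices and edges of $G_i\setminus G_{i-1}$ together with endpoints of those edges. FB-persistence: the persistence diagrams (from the interval decomposition of $H_k(-;\mathbb{Z}/2)$, indexed by position) of $G_0\subset\dots\subset G_n=G\to Z_1\to\dots\to Z_{n+1}=\text{point}$, where $Z_1=G/\mathrm{IC}_n$ and $Z_{j+1}=Z_j/( *_j\cup\mathrm{IC}_{n-j})$, $*_j$ being the point to which previously contracted pieces were collapsed. Extended persistence: regard $G$ as a topological space and extend $f$ linearly along edges; set $G_a=\{x: f(x)\le a\}$, $G^a=\{x:f(x)\ge a\}$; the extended persistence diagrams are the persistence diagrams of $0\to H_k(G_{a_0})\to\dots\to H_k(G_{a_n})=H_k(G)\to H_k(G,G^{a_n})\to\dots\to H_k(G,G^{a_0})$ (maps induced by inclusions of spaces and pairs), $k=0,1$, with $\mathbb{Z}/2$ coefficients. *)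

(* Defs.v *)
From Stdlib Require Import Reals.
From mathcomp Require Import all_boot all_order all_algebra.
Set Implicit Arguments.
Unset Strict Implicit.
Unset Printing Implicit Defensive.
Import GRing.Theory.

(* An edge e joins [src e] and [tgt e]; the orientation is irrelevant. *)
Record graph := Graph {
  vert : finType;
  edge : finType;
  src : edge -> vert;
  tgt : edge -> vert }.

Record egraph := EGraph {
  eg :> graph;
  pos : vert eg -> (R * R)%type;
  curve : edge eg -> R -> (R * R)%type;
  pos_inj : forall v w, pos v = pos w -> v = w;
  no_loop : forall e : edge eg, src e <> tgt e;
  curve_cont1 : forall e, continuity (fun t => fst (curve e t));
  curve_cont2 : forall e, continuity (fun t => snd (curve e t));
  curve_src : forall e, curve e R0 = pos (src e);
  curve_tgt : forall e, curve e R1 = pos (tgt e);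
  curve_inj : forall e s t, Rle R0 s /\ Rle s R1 -> Rle R0 t /\ Rle t R1 ->
                curve e s = curve e t -> s = t;
  curve_avoid : forall e t v, Rlt R0 t /\ Rlt t R1 -> curve e t <> pos v;
  curve_disj : forall e e' s t, e <> e' -> Rlt R0 s /\ Rlt s R1 -> Rlt R0 t /\ Rlt t R1 ->
                curve e s <> curve e' t }.

Definition ht (G : egraph) (v : vert G) : R := snd (pos v).

Definition beqR (x y : R) : bool := if Req_EM_T x y then true else false.
Definition bltR (x y : R) : bool := if Rlt_dec x y then true else false.

Definition canon (G : egraph) (w : vert G) : bool :=
  [forall u : vert G, beqR (ht u) (ht w) ==> (enum_rank w <= enum_rank u)%N].

(* number of distinct values a_0 < ... < a_n of f, i.e. n+1 *)
Definition nlev (G : egraph) : nat := #|[set w : vert G | canon w]|.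

(* lvl v = i  iff  f(v) = a_i *)
Definition lvl (G : egraph) (v : vert G) : nat :=
  #|[set w : vert G | canon w && bltR (ht w) (ht v)]|.

(* f(e) = max(f(v),f(w)) = a_(elvl e) *)
Definition elvl (G : egraph) (e : edge G) : nat :=
  maxn (lvl (src e)) (lvl (tgt e)).

(* Cellular spaces built from G: a subgraph K together with a subgraph *)
(* A of K which is either collapsed to a single point * (star = true;  *)
(* quotient space K/A) or divided out (star = false; the pair (K,A),   *)
(* relative homology).  With A empty both give K itself.               *)
Record cspace (G : graph) := CSpace {
  inKv : pred (vert G); inKe : pred (edge G);
  inAv : pred (vert G); inAe : pred (edge G);
  star : bool }.

Definition F2 := 'F_2.

Local Open Scope ring_scope.

Section Cells.
Variable G : graph.
Implicit Types X Y : cspace G.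

Definition has_star X : bool := star X && [exists v, inAv X v].

(* 0-cells: option (vert G), None standing for the point *. *)
Definition cell0 X (c : option (vert G)) : bool :=
  match c with None => has_star X | Some v => inKv X v && ~~ inAv X v end.
Definition cell1 X (e : edge G) : bool := inKe X e && ~~ inAe X e.

(* coefficient of the 0-cell c' in the image in Y of the 0-cell c *)
Definition imgc Y (c c' : option (vert G)) : bool :=
  match c with
  | Some v => if inAv Y v then (c' == None) && has_star Y else c' == Some v
  | None => (c' == None) && has_star Y
  end.

Definition d0 := #|{: option (vert G)}|.
Definition d1 := #|{: edge G}|.

(* cellular chain groups, as row spaces inside F2^(cells) *)
Definition C1 X : 'M[F2]_d1 :=
  \matrix_(i, j) ((i == j) && cell1 X (enum_val i))%:R.
Definition C0 X : 'M[F2]_d0 :=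
  \matrix_(i, j) ((i == j) && cell0 X (enum_val i))%:R.
Definition bnd X : 'M[F2]_(d1, d0) :=
  \matrix_(i, j) ((imgc X (Some (src (enum_val i))) (enum_val j))%:R +
                  (imgc X (Some (tgt (enum_val i))) (enum_val j))%:R).

(* cycles and boundaries in degrees 0 and 1 (no 2-cells) *)
Definition Z0 X : 'M[F2]_d0 := C0 X.
Definition B0 X : 'M[F2]_(d1, d0) := C1 X *m bnd X.
Definition Z1 X : 'M[F2]_d1 := (C1 X :&: kermx (bnd X))%MS.
Definition B1 X : 'M[F2]_d1 := 0.

(* cellular chain maps induced by the identity of G / the quotient maps,
   into the space Y *)
Definition M0 Y : 'M[F2]_d0 :=
  \matrix_(i, j) (imgc Y (enum_val i) (enum_val j))%:R.
Definition M1 Y : 'M[F2]_d1 :=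
  \matrix_(i, j) ((i == j) && cell1 Y (enum_val i))%:R.

End Cells.

(* Persistence diagram of a module V_0 -> V_1 -> ... -> V_N, V_p =     *)
(* Z p / B p (subspaces of F2^d), maps induced by the matrices M p :   *)
(* V_p -> V_(p+1).  Multiplicity of the interval [b,e] in the interval *)
(* decomposition, via the rank function r(i,j) = rank (V_i -> V_j).    *)
Fixpoint mprod d (M : nat -> 'M[F2]_d) (i k : nat) : 'M[F2]_d :=
  match k with
  | 0 => 1%:M
  | k'.+1 => mprod M i k' *m M (i + k')%N
  end.

Definition prank m1 m2 d (Z : nat -> 'M[F2]_(m1, d)) (B : nat -> 'M[F2]_(m2, d))
  (M : nat -> 'M[F2]_d) (i j : nat) : int :=
  (\rank (Z i *m mprod M i (j - i) + B j)%MS)%:Z - (\rank (B j))%:Z.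

Definition pdiag (N : nat) (r : nat -> nat -> int) (b e : nat) : int :=
  if (b <= e <= N)%N then
    (r b e - (if b == 0%N then 0 else r b.-1 e)
           - (if e == N then 0 else r b e.+1)
           + (if (b == 0%N) || (e == N) then 0 else r b.-1 e.+1))%R
  else 0%R.

Definition dgm (G : graph) (N : nat) (S : nat -> cspace G) (k : nat) :
  nat -> nat -> int :=
  if k == 0%N then
    pdiag N (prank (fun p => Z0 (S p)) (fun p => B0 (S p))
                   (fun p => M0 (S p.+1)))
  else
    pdiag N (prank (fun p => Z1 (S p)) (fun p => B1 (S p))
                   (fun p => M1 (S p.+1))).

Section Filtrations.
Variable G : egraph.

Definition subl (i : nat) : cspace G :=
  @CSpace G (fun v => lvl v <= i)%N (fun e => elvl e <= i)%N
            pred0 pred0 false.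

(* Z_j = G / (IC_n u ... u IC_(n-j+1)), everything collapsed to one point;
   the union of IC_m, m >= t, consists of the cells of level >= t together
   with endpoints of edges of level >= t. *)
Definition fbquot (j : nat) : cspace G :=
  let t := (nlev G - j)%N in
  @CSpace G predT predT
    (fun v => (t <= lvl v)%N ||
              [exists e, (t <= elvl e)%N && ((src e == v) || (tgt e == v))])
    (fun e => t <= elvl e)%N true.

(* FB sequence: positions 0..n are G_0..G_n, positions n+1..2n+1 are Z_1..Z_(n+1) *)
Definition fbseq (p : nat) : cspace G :=
  if (p < nlev G)%N then subl p else fbquot (p - nlev G).+1.

(* pair (G, G^(a_i)), with G^(a_i) replaced by the subcomplex of cells
   with f >= a_i (onto which it deformation retracts) *)
Definition suppair (i : nat) : cspace G :=
  @CSpace G predT predT (fun v => i <= lvl v)%N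
    (fun e => i <= minn (lvl (src e)) (lvl (tgt e)))%N false.

(* extended sequence: positions 0..n are G_(a_0)..G_(a_n), positions
   n+1..2n+1 are (G,G^(a_n)), ..., (G,G^(a_0)) *)
Definition extseq (p : nat) : cspace G :=
  if (p < nlev G)%N then subl p else suppair ((nlev G).-1 - (p - nlev G))%N.

Definition FBdgm (k : nat) := dgm (nlev G).*2.-1 fbseq k.
Definition EPdgm (k : nat) := dgm (nlev G).*2.-1 extseq k.

End Filtrations.

(* Main.v *)
Require Import Defs.
From Stdlib Require Import Reals.
From mathcomp Require Import all_boot all_order all_algebra.
From Stdlib Require Import Lra Psatz FunctionalExtensionality.
From mathcomp Require Import mxabelem.

Module P1.
Import GRing.Theory.
Set Implicit Arguments. Unset Strict Implicit. Unset Printing Implicit Defensive.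
Local Open Scope ring_scope.

Lemma F2_cases (x : F2) : x = 0 \/ x = 1.
Proof.
case: x => [[|[|k]] Hk]; [left|right|exfalso]; try by apply: val_inj.
by move: Hk; rewrite /=.
Qed.

Lemma F2_01 (x : F2) : x = (x == 1)%:R.
Proof. by case: (F2_cases x) => ->. Qed.

Lemma F2_addE (x y : F2) : (x + y == 1) = (x == 1) (+) (y == 1).
Proof. by case: (F2_cases x) => ->; case: (F2_cases y) => ->. Qed.

Lemma F2_mulE (x y : F2) : (x * y == 1) = (x == 1) && (y == 1).
Proof. by case: (F2_cases x) => ->; case: (F2_cases y) => ->. Qed.

Lemma F2_natE (b : bool) : ((b%:R : F2) == 1) = b.
Proof. by case: b. Qed.

Lemma F2_card : #|{: F2}| = 2%N.
Proof. exact: card_Fp. Qed.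

End P1.
Import P1.

Module P2.
Import GRing.Theory.
Set Implicit Arguments. Unset Strict Implicit. Unset Printing Implicit Defensive.
Local Open Scope ring_scope.

Definition xorl (s t : seq bool) : seq bool := map (fun p => p.1 (+) p.2) (zip s t).
Definition zerol (n : nat) : seq bool := nseq n false.
Definition comb (n : nat) (c : seq bool) (L : seq (seq bool)) : seq bool :=
  foldr (fun p acc => if p.1 then xorl p.2 acc else acc) (zerol n) (zip c L).
Fixpoint allbool (n : nat) : seq (seq bool) :=
  if n is n'.+1 then [seq b :: s | b <- [:: false; true], s <- allbool n'] else [:: [::]].

Lemma size_xorl s t : size (xorl s t) = minn (size s) (size t).
Proof. by rewrite size_map size_zip. Qed.

Lemma nth_xorl s t j : size s = size t -> nth false (xorl s t) j = nth false s j (+) nth false t j.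
Proof.
move=> Est; case: (ltnP j (size s)) => Hj.
  rewrite (nth_map (false,false)) ?size_zip ?Est ?minnn -?Est //.
  by rewrite nth_zip.
by rewrite !nth_default ?size_xorl ?Est ?minnn -?Est.
Qed.

Lemma size_comb n c L : all (fun r => size r == n) L -> size (comb n c L) = n.
Proof.
elim: c L => [|b c IH] [|r L] //=; try by rewrite size_nseq.
case/andP=> /eqP Hr HL; case: b => //=; last exact: IH.
by rewrite size_xorl IH // Hr minnn.
Qed.

Lemma nth_comb n c L j : all (fun r => size r == n) L ->
  nth false (comb n c L) j = foldr (fun p acc => (p.1 && nth false p.2 j) (+) acc) false (zip c L).
Proof.
elim: c L => [|b c IH] [|r L] //=; try by rewrite nth_nseq if_same.
case/andP=> /eqP Hr HL; case: b => /=; last exact: IH.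
by rewrite nth_xorl ?IH // size_comb.
Qed.

Lemma mem_cons_map (b c : bool) s L : (b :: s \in [seq c :: x | x <- L]) = (b == c) && (s \in L).
Proof.
apply/mapP/andP => [[x Hx [-> ->]]|[/eqP -> H]]; first by rewrite eqxx.
by exists s.
Qed.

Lemma nil_map (c : bool) (L : seq (seq bool)) : ([::] \in [seq c :: x | x <- L]) = false.
Proof. by apply/mapP => -[]. Qed.

Lemma mem_allbool n s : (s \in allbool n) = (size s == n).
Proof.
elim: n s => [|n IH] s; first by case: s.
rewrite /= cats0 mem_cat; case: s => [|b s]; first by rewrite !nil_map.
by rewrite !mem_cons_map IH /= eqSS; case: b; rewrite ?andbF ?orbF.
Qed.

End P2.
Import P2.

Module P3.
Import GRing.Theory.
Set Implicit Arguments. Unset Strict Implicit. Unset Printing Implicit Defensive.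
Local Open Scope ring_scope.

Definition phi n (v : 'rV[F2]_n) : seq bool := [seq v 0 j == 1 | j <- enum 'I_n].
Definition psi n (s : seq bool) : 'rV[F2]_n := \row_j (nth false s j)%:R.

Lemma size_phi n (v : 'rV[F2]_n) : size (phi v) = n.
Proof. by rewrite size_map size_enum_ord. Qed.

Lemma nth_phi n (v : 'rV[F2]_n) (j : 'I_n) : nth false (phi v) j = (v 0 j == 1).
Proof.
rewrite (nth_map j) ?size_enum_ord //; congr (v 0 _ == 1).
by apply: val_inj; rewrite /= nth_enum_ord.
Qed.

Lemma phi_inj n : injective (@phi n).
Proof.
move=> u v E; apply/rowP => j; rewrite (F2_01 (u 0 j)) (F2_01 (v 0 j)).
by rewrite -!nth_phi E.
Qed.

Lemma psiK n s : size s = n -> phi (psi n s) = s.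
Proof.
move=> Hs; apply: (@eq_from_nth _ false); first by rewrite size_phi.
move=> i; rewrite size_phi => Hi.
by rewrite (nth_phi _ (Ordinal Hi)) mxE F2_natE.
Qed.

Lemma phiD n (u v : 'rV[F2]_n) : phi (u + v) = xorl (phi u) (phi v).
Proof.
apply: (@eq_from_nth _ false); first by rewrite size_xorl !size_phi minnn.
move=> i; rewrite size_phi => Hi.
by rewrite nth_xorl ?size_phi // !(nth_phi _ (Ordinal Hi)) mxE F2_addE.
Qed.

Lemma phi0 n : phi (0 : 'rV[F2]_n) = zerol n.
Proof.
apply: (@eq_from_nth _ false); first by rewrite size_phi size_nseq.
move=> i; rewrite size_phi => Hi.
by rewrite (nth_phi _ (Ordinal Hi)) mxE nth_nseq Hi.
Qed.

Definition models m n (A : 'M[F2]_(m, n)) (L : seq (seq bool)) :=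
  [/\ size L = m, all (fun r => size r == n) L &
      forall (i : 'I_m) (j : 'I_n), A i j = (nth false (nth [::] L i) j)%:R].

Lemma big_F2 (I : eqType) (r : seq I) (F : I -> F2) :
  ((\sum_(i <- r) F i) == 1) = foldr (fun i acc => (F i == 1) (+) acc) false r.
Proof.
elim: r => [|i r IH]; first by rewrite big_nil.
by rewrite big_cons F2_addE IH.
Qed.

Lemma phi_mul m n (u : 'rV[F2]_m) (A : 'M[F2]_(m, n)) L :
  models A L -> phi (u *m A) = comb n (phi u) L.
Proof.
case=> HL Hsz HA.
apply: (@eq_from_nth _ false); first by rewrite size_phi size_comb.
move=> j; rewrite size_phi => Hj.
rewrite nth_comb // (nth_phi _ (Ordinal Hj)) mxE big_F2.
have -> : L = [seq nth [::] L (i : 'I_m) | i <- enum 'I_m].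
  apply: (@eq_from_nth _ [::]); first by rewrite size_map size_enum_ord.
  move=> i Hi; have Hi' : (i < m)%N by rewrite -HL.
  rewrite (nth_map (Ordinal Hi')) ?size_enum_ord //.
  by rewrite nth_enum_ord.
have E : index_enum 'I_m = enum 'I_m.
  by rewrite -deprecated_filter_index_enum filter_predT.
rewrite /phi E.
elim: (enum 'I_m) => [|i r IH] //=.
by rewrite IH F2_mulE HA F2_natE.
Qed.

End P3.
Import P3.

Module P4.
Import GRing.Theory.
Set Implicit Arguments. Unset Strict Implicit. Unset Printing Implicit Defensive.
Local Open Scope ring_scope.

Definition rep m n (A : 'M[F2]_(m, n)) (L : seq (seq bool)) :=
  (forall v : 'rV[F2]_n, (v <= A)%MS = (phi v \in L)) /\ all (fun s => size s == n) L.

Lemma rep_phi n (L : seq (seq bool)) s : all (fun s => size s == n) L -> s \in L ->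
  s = phi (psi n s).
Proof. by move=> /allP H /H /eqP Hs; rewrite psiK. Qed.

Lemma rank_rep m n (A : 'M[F2]_(m, n)) L : rep A L ->
  \rank A = trunc_log 2 (size (undup L)).
Proof.
case=> HA Hsz.
have <- : #|rowg A| = size (undup L).
  rewrite cardE -(size_map (@phi n)).
  apply: perm_size; apply: uniq_perm.
  - by rewrite (map_inj_uniq (@phi_inj n)) enum_uniq.
  - exact: undup_uniq.
  move=> s; rewrite mem_undup; apply/mapP/idP => [[v]|Hs].
    by rewrite mem_enum mem_rowg HA => H ->.
  exists (psi n s); last exact: rep_phi Hs.
  by rewrite mem_enum mem_rowg HA -(rep_phi Hsz Hs).
by rewrite card_rowg F2_card trunc_expnK.
Qed.

Lemma all_comb n (L : seq (seq bool)) (C : seq (seq bool)) :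
  all (fun r => size r == n) L -> all (fun s => size s == n) [seq comb n c L | c <- C].
Proof. by move=> H; apply/allP => s /mapP [c _ ->]; rewrite size_comb. Qed.

Lemma rep_models m n (A : 'M[F2]_(m, n)) L : models A L ->
  rep A [seq comb n c L | c <- allbool m].
Proof.
move=> HA; have [HL Hsz _] := HA; split; last exact: all_comb.
move=> v; apply/submxP/mapP => [[u ->]|[c Hc Ev]].
  by exists (phi u); rewrite ?mem_allbool ?size_phi // (phi_mul _ HA).
exists (psi m c); apply: phi_inj; rewrite (phi_mul _ HA) Ev psiK //.
by move: Hc; rewrite mem_allbool => /eqP.
Qed.

Lemma rep_mul m n p (A : 'M[F2]_(m, n)) (P : 'M[F2]_(n, p)) L LP :
  rep A L -> models P LP -> rep (A *m P) [seq comb p s LP | s <- L].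
Proof.
move=> [HA Hsz] HP; have [_ HszP _] := HP; split; last exact: all_comb.
move=> v; apply/submxP/mapP => [[u ->]|[s Hs Ev]].
  by exists (phi (u *m A)); rewrite -?HA ?submxMl // mulmxA (phi_mul _ HP).
have := HA (psi n s); rewrite -(rep_phi Hsz Hs) Hs => /submxP [u Hu].
exists u; apply: phi_inj; rewrite mulmxA -Hu (phi_mul _ HP) Ev.
by rewrite -(rep_phi Hsz Hs).
Qed.

Lemma rep_cap m1 m2 n (A : 'M[F2]_(m1, n)) (B : 'M[F2]_(m2, n)) L1 L2 :
  rep A L1 -> rep B L2 -> rep (A :&: B)%MS [seq s <- L1 | s \in L2].
Proof.
move=> [HA Hsz] [HB _]; split => [v|].
  by rewrite sub_capmx HA HB mem_filter andbC.
by apply/allP => s; rewrite mem_filter => /andP [_ /(allP Hsz)].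
Qed.

Lemma allbool_size n : all (fun s => size s == n) (allbool n).
Proof. by apply/allP => s; rewrite mem_allbool. Qed.

Lemma rep_ker m n (B : 'M[F2]_(m, n)) LB : models B LB ->
  rep (kermx B) [seq s <- allbool m | comb n s LB == zerol n].
Proof.
move=> HB; split => [v|].
  by rewrite sub_kermx mem_filter mem_allbool size_phi eqxx andbT -(phi_mul _ HB)
     -(phi0 n) (inj_eq (@phi_inj n)).
by apply/allP => s; rewrite mem_filter mem_allbool => /andP [].
Qed.

Lemma rep_zero m n : rep (0 : 'M[F2]_(m, n)) [:: zerol n].
Proof.
split => [v|]; last by rewrite /= size_nseq eqxx.
rewrite inE -(phi0 n) (inj_eq (@phi_inj n)).
apply/submxP/eqP => [[u ->]|->]; first by rewrite mulmx0.
by exists 0; rewrite mulmx0.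
Qed.

Lemma rep_adds m1 m2 n (A : 'M[F2]_(m1, n)) (B : 'M[F2]_(m2, n)) L1 L2 :
  rep A L1 -> rep B L2 -> rep (A + B)%MS [seq xorl s t | s <- L1, t <- L2].
Proof.
move=> [HA Hsz1] [HB Hsz2]; split => [v|].
  apply/sub_addsmxP/allpairsP => [[u ->]|[[s t] /= [Hs Ht Ev]]].
    exists (phi (u.1 *m A), phi (u.2 *m B)); rewrite phiD -!HA -?HB ?submxMl //.
  have := HA (psi n s); rewrite -(rep_phi Hsz1 Hs) Hs => /submxP [a Ha].
  have := HB (psi n t); rewrite -(rep_phi Hsz2 Ht) Ht => /submxP [b Hb].
  exists (a, b); apply: phi_inj => /=; rewrite Ev -Ha -Hb phiD.
  by rewrite -(rep_phi Hsz1 Hs) -(rep_phi Hsz2 Ht).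
apply/allP => s /allpairsP [[a b] /= [Ha Hb ->]].
by rewrite size_xorl (eqP (allP Hsz1 _ Ha)) (eqP (allP Hsz2 _ Hb)) minnn.
Qed.

Definition lmul n (LA LB : seq (seq bool)) := [seq comb n r LB | r <- LA].
Definition idL n := [seq [seq (i == j)%N | j <- iota 0 n] | i <- iota 0 n].

Lemma models_mul m n p (A : 'M[F2]_(m, n)) (B : 'M[F2]_(n, p)) LA LB :
  models A LA -> models B LB -> models (A *m B) (lmul p LA LB).
Proof.
move=> [HL Hsz HA] HB; have [_ HszB _] := HB; split.
- by rewrite size_map.
- exact: all_comb.
move=> i j; rewrite (F2_01 ((A *m B) i j)).
have -> : (A *m B) i j = (row i A *m B) 0 j by rewrite -row_mul /row !mxE.
rewrite -nth_phi (phi_mul _ HB) (nth_map [::]) ?HL //.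
congr ((nth false (comb _ _ _) _)%:R).
apply: (@eq_from_nth _ false); first by rewrite size_phi (eqP (allP Hsz _ (mem_nth _ _))) ?HL.
move=> k; rewrite size_phi => Hk.
by rewrite (nth_phi _ (Ordinal Hk)) mxE HA F2_natE.
Qed.

Lemma models_one n : models (1%:M : 'M[F2]_n) (idL n).
Proof.
split.
- by rewrite size_map size_iota.
- by apply/allP => r /mapP [i _ ->]; rewrite size_map size_iota.
move=> i j; rewrite mxE (nth_map 0%N) ?size_iota // (nth_map 0%N) ?size_iota //.
by rewrite !nth_iota // !add0n.
Qed.

End P4.
Import P4.

Module P5.
Import GRing.Theory.
Set Implicit Arguments. Unset Strict Implicit. Unset Printing Implicit Defensive.
Local Open Scope ring_scope.

Lemma enum_opt (T : finType) : enum {: option T} = None :: map Some (enum T).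
Proof. rewrite !enumT; rewrite {1}unlock; by []. Qed.

Lemma exists_has (T : finType) (P : pred T) : [exists x, P x] = has P (enum T).
Proof.
apply/existsP/hasP => [[x Px]|[x _ Px]]; last by exists x.
by exists x; rewrite ?mem_enum.
Qed.

Definition mkL m n (f : nat -> nat -> bool) := [seq [seq f i j | j <- iota 0 n] | i <- iota 0 m].

Lemma models_fun m n (A : 'M[F2]_(m, n)) (f : nat -> nat -> bool) :
  (forall (i : 'I_m) (j : 'I_n), A i j = (f i j)%:R) -> models A (mkL m n f).
Proof.
move=> H; split.
- by rewrite size_map size_iota.
- by apply/allP => r /mapP [i _ ->]; rewrite size_map size_iota.
move=> i j; rewrite H (nth_map 0%N) ?size_iota // (nth_map 0%N) ?size_iota //.
by rewrite !nth_iota // !add0n.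
Qed.

Fixpoint cmprod d (LM : nat -> seq (seq bool)) (i k : nat) : seq (seq bool) :=
  match k with
  | 0 => idL d
  | k'.+1 => lmul d (cmprod d LM i k') (LM (i + k')%N)
  end.

Lemma models_mprod d (M : nat -> 'M[F2]_d) LM i k :
  (forall p, models (M p) (LM p)) -> models (mprod M i k) (cmprod d LM i k).
Proof.
move=> HM; elim: k => [|k IH] /=; first exact: models_one.
exact: models_mul.
Qed.

Section Comp.
Variable G : graph.
Variable vl : seq (option (vert G)).
Variable vs : seq (vert G).
Variable el : seq (edge G).
Variable e0 : edge G.
Variables n0 n1 : nat.
Hypothesis Hd0 : Defs.d0 G = n0.
Hypothesis Hd1 : Defs.d1 G = n1.
Hypothesis Hvl : enum {: option (vert G)} = vl.
Hypothesis Hvs : enum (vert G) = vs.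
Hypothesis Hel : enum (edge G) = el.

Definition hsc (X : cspace G) := star X && has (inAv X) vs.
Definition cell0c (X : cspace G) c :=
  match c with None => hsc X | Some v => inKv X v && ~~ inAv X v end.
Definition imgcc (Y : cspace G) (c c' : option (vert G)) : bool :=
  match c with
  | Some v => if inAv Y v then (c' == None) && hsc Y else c' == Some v
  | None => (c' == None) && hsc Y
  end.

Lemma hscE X : has_star X = hsc X.
Proof. by rewrite /has_star /hsc exists_has Hvs. Qed.

Lemma enum_val0 (i : 'I_(Defs.d0 G)) : enum_val i = nth None vl i.
Proof. by rewrite (enum_val_nth None) -Hvl. Qed.
Lemma enum_val1 (i : 'I_(Defs.d1 G)) : enum_val i = nth e0 el i.
Proof. by rewrite (enum_val_nth e0) -Hel. Qed.

Definition mkC0 X := mkL n0 n0 (fun i j => (i == j)%N && cell0c X (nth None vl i)).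
Definition mkC1 X := mkL n1 n1 (fun i j => (i == j)%N && cell1 X (nth e0 el i)).
Definition mkbnd X := mkL n1 n0 (fun i j =>
  imgcc X (Some (src (nth e0 el i))) (nth None vl j) (+) imgcc X (Some (tgt (nth e0 el i))) (nth None vl j)).
Definition mkM0 X := mkL n0 n0 (fun i j => imgcc X (nth None vl i) (nth None vl j)).

Lemma imgcE X c c' : imgc X c c' = imgcc X c c'.
Proof. by case: c => [v|] /=; rewrite hscE. Qed.

Lemma F2_addn (a b : bool) : (a%:R + b%:R : F2) = (a (+) b)%:R.
Proof. by case: a; case: b; rewrite /= ?addr0 ?add0r //; apply: val_inj. Qed.

Lemma models_C0 X : models (Defs.C0 X) (mkC0 X).
Proof.
rewrite /mkC0 /mkC1 /mkbnd /mkM0 -?Hd0 -?Hd1; apply: models_fun => i j; rewrite mxE enum_val0.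
by case: (nth None vl i) => [v|] //=; rewrite hscE.
Qed.
Lemma models_C1 X : models (Defs.C1 X) (mkC1 X).
Proof. rewrite /mkC0 /mkC1 /mkbnd /mkM0 -?Hd0 -?Hd1; by apply: models_fun => i j; rewrite mxE enum_val1. Qed.
Lemma models_M1 X : models (Defs.M1 X) (mkC1 X).
Proof. rewrite /mkC0 /mkC1 /mkbnd /mkM0 -?Hd0 -?Hd1; by apply: models_fun => i j; rewrite mxE enum_val1. Qed.
Lemma models_bnd X : models (bnd X) (mkbnd X).
Proof. rewrite /mkC0 /mkC1 /mkbnd /mkM0 -?Hd0 -?Hd1; by apply: models_fun => i j; rewrite mxE enum_val0 enum_val1 !imgcE F2_addn. Qed.
Lemma models_M0 X : models (Defs.M0 X) (mkM0 X).
Proof. rewrite /mkC0 /mkC1 /mkbnd /mkM0 -?Hd0 -?Hd1; by apply: models_fun => i j; rewrite mxE !enum_val0 imgcE. Qed.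

Definition rk (L : seq (seq bool)) : int := (trunc_log 2 (size (undup L)))%:Z.

Definition cprank0 (S : nat -> cspace G) (i j : nat) : int :=
  let P := cmprod n0 (fun p => mkM0 (S p.+1)) i (j - i) in
  let LZ := [seq comb n0 c (mkC0 (S i)) | c <- allbool n0] in
  let LB := [seq comb n0 s (mkbnd (S j)) | s <- [seq comb n1 c (mkC1 (S j)) | c <- allbool n1]] in
  rk [seq xorl s t | s <- [seq comb n0 s P | s <- LZ], t <- LB] - rk LB.

Definition cprank1 (S : nat -> cspace G) (i j : nat) : int :=
  let P := cmprod n1 (fun p => mkC1 (S p.+1)) i (j - i) in
  let LZ := [seq s <- [seq comb n1 c (mkC1 (S i)) | c <- allbool n1] |
              s \in [seq s <- allbool n1 | comb n0 s (mkbnd (S i)) == zerol n0]] in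
  let LB := [:: zerol n1] in
  rk [seq xorl s t | s <- [seq comb n1 s P | s <- LZ], t <- LB] - rk LB.

Lemma prank0E S i j :
  prank (fun p => Defs.Z0 (S p)) (fun p => Defs.B0 (S p)) (fun p => Defs.M0 (S p.+1)) i j = cprank0 S i j.
Proof.
rewrite /prank /cprank0 /rk -?Hd0 -?Hd1.
have HB := rep_mul (rep_models (models_C1 (S j))) (models_bnd (S j)).
rewrite (rank_rep HB); congr (_%:Z - _).
apply: rank_rep; apply: rep_adds => //.
apply: rep_mul; first exact: rep_models (models_C0 (S i)).
by apply: models_mprod => p; apply: models_M0.
Qed.

Lemma prank1E S i j :
  prank (fun p => Defs.Z1 (S p)) (fun p => Defs.B1 (S p)) (fun p => Defs.M1 (S p.+1)) i j = cprank1 S i j.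
Proof.
rewrite /prank /cprank1 /rk -?Hd0 -?Hd1.
rewrite (rank_rep (rep_zero _ _)); congr (_%:Z - _).
apply: rank_rep; apply: rep_adds; last exact: rep_zero.
apply: rep_mul; last by apply: models_mprod => p; apply: models_M1.
apply: rep_cap; first exact: rep_models (models_C1 (S i)).
exact: rep_ker (models_bnd (S i)).
Qed.

Definition cdgm (N : nat) (S : nat -> cspace G) (k : nat) : nat -> nat -> int :=
  if k == 0%N then pdiag N (cprank0 S) else pdiag N (cprank1 S).

Lemma dgmE N S k b e : dgm N S k b e = cdgm N S k b e.
Proof.
rewrite /dgm /cdgm; case: (k == 0%N); rewrite /pdiag.
  by rewrite !prank0E.
by rewrite !prank1E.
Qed.
End Comp.

End P5.
Import P5.

Module P6.
Set Implicit Arguments. Unset Strict Implicit. Unset Printing Implicit Defensive.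

Lemma beqR_INR a b : beqR (INR a) (INR b) = (a == b).
Proof.
rewrite /beqR; case: Req_EM_T => [E|H] /=; first by rewrite (INR_eq _ _ E) eqxx.
by apply/esym/eqP => E; apply: H; rewrite E.
Qed.

Lemma bltR_INR a b : bltR (INR a) (INR b) = (a < b)%N.
Proof.
rewrite /bltR; case: Rlt_dec => [E|/Rnot_lt_le /INR_le /leP H] /=.
  by apply/esym/ltP/INR_lt.
by apply/esym/negbTE; rewrite -leqNgt.
Qed.

Lemma card_ltK K x : (x <= K)%N -> #|[set y : 'I_K | (y < x)%N]| = x.
Proof.
elim: x => [|x IH] Hle.
  by apply/eqP; rewrite cards_eq0; apply/eqP/setP => y; rewrite !inE.
rewrite (cardsD1 (Ordinal Hle)) inE ltnSn add1n -{3}(IH (ltnW Hle)).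
congr (_.+1); apply: eq_card => y; rewrite !inE ltnS leq_eqVlt -val_eqE /=.
by case: (y =P Ordinal Hle :> nat) => [->|]; rewrite ?ltnn ?andbF.
Qed.

Section Lvl.
Variable G : egraph.
Variable h : vert G -> nat.
Variable K : nat.
Hypothesis Hh : forall v, ht v = INR (h v).
Hypothesis HK : forall v, (h v < K)%N.
Hypothesis Hsurj : forall y, (y < K)%N -> exists v, h v = y.

Lemma canonE w : Defs.canon w = [forall u, (h u == h w) ==> (enum_rank w <= enum_rank u)%N].
Proof. by apply: eq_forallb => u; rewrite !Hh beqR_INR. Qed.

Lemma card_canon x : (x <= K)%N -> #|[set w : vert G | Defs.canon w && (h w < x)%N]| = x.
Proof.
move=> Hle; rewrite -{2}(card_ltK Hle).
pose f (w : vert G) : 'I_K := Ordinal (HK w).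
have finj : {in [set w : vert G | Defs.canon w && (h w < x)%N] &, injective f}.
  move=> w1 w2; rewrite !inE !canonE => /andP [/forallP Cw1 _] /andP [/forallP C2 _] E.
  have Eh : h w1 = h w2 by have := congr1 val E.
  apply: enum_rank_inj; apply: val_inj; apply/eqP; rewrite eqn_leq.
  by have := Cw1 w2; have := C2 w1; rewrite Eh eqxx /= => -> ->.
rewrite -(card_in_imset finj); apply: eq_card => y.
rewrite [in RHS]inE; apply/imsetP/idP => [[w]|Hy].
  by rewrite inE => /andP [_ Hw] ->.
have [v Hv] := Hsurj (ltn_ord y).
have Pv : h v == y by rewrite Hv.
have [w' Hw' Hmin] : exists2 w', h w' == y & forall u, h u == y -> (enum_rank w' <= enum_rank u)%N.
  case: (@arg_minnP _ v (fun u => h u == y) (fun u => val (enum_rank u)) Pv) => w' Hw' Hmin.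
  by exists w'.
exists w'; last by apply: val_inj => /=; rewrite (eqP Hw').
rewrite inE canonE (eqP Hw') Hy andbT; apply/forallP => u; apply/implyP => Hu.
exact: Hmin.
Qed.

Lemma lvlE v : lvl v = h v.
Proof.
rewrite /lvl -(@card_canon (h v)); last exact: ltnW.
by apply: eq_card => w; rewrite !inE !Hh bltR_INR.
Qed.

Lemma nlevE : nlev G = K.
Proof.
rewrite /nlev -(@card_canon K) //.
by apply: eq_card => w; rewrite !inE HK andbT.
Qed.
End Lvl.

End P6.
Import P6.

Module P7.
Set Implicit Arguments. Unset Strict Implicit. Unset Printing Implicit Defensive.
Local Open Scope R_scope.

Definition gG : graph := @Graph 'I_2 'I_2 (fun _ => ord0) (fun _ => ord_max).
Definition posG (v : 'I_2) : (R * R)%type := (0, INR v).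
Definition curveG (e : 'I_2) (t : R) : (R * R)%type :=
  ((if val e == 0%N then (t * (1 - t)) else (- (t * (1 - t)))), t).

Lemma ord2_cases (v : 'I_2) : v = ord0 \/ v = ord_max.
Proof. by case: v => [[|[|k]] H]; [left|right|]; try apply: val_inj. Qed.

Lemma posG_inj : forall v w : vert gG, posG v = posG w -> v = w.
Proof.
move=> v w [] /INR_eq E; exact: val_inj.
Qed.

Lemma loopG : forall e : edge gG, src e <> tgt e.
Proof. by []. Qed.

Lemma contG1 : forall e : edge gG, continuity (fun t => fst (curveG e t)).
Proof. move=> e; rewrite /curveG /=; case: (val e == 0%N); reg. Qed.
Lemma contG2 : forall e : edge gG, continuity (fun t => snd (curveG e t)).
Proof. move=> e; rewrite /curveG /=; reg. Qed.
Lemma srcG : forall e : edge gG, curveG e R0 = posG (src e).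
Proof. move=> e; rewrite /curveG /posG /=; case: (val e == 0%N); f_equal; lra. Qed.
Lemma tgtG : forall e : edge gG, curveG e R1 = posG (tgt e).
Proof. move=> e; rewrite /curveG /posG /=; case: (val e == 0%N); f_equal; lra. Qed.
Lemma injG : forall e s t, Rle R0 s /\ Rle s R1 -> Rle R0 t /\ Rle t R1 ->
                curveG e s = curveG e t -> s = t.
Proof. by move=> e s t _ _ [_]. Qed.
Lemma avoidG : forall (e : edge gG) t (v : vert gG), Rlt R0 t /\ Rlt t R1 -> curveG e t <> posG v.
Proof.
move=> e t v [H1 H2] [_]; case: (ord2_cases v) => -> /=; lra.
Qed.
Lemma disjG : forall (e e' : edge gG) s t, e <> e' -> Rlt R0 s /\ Rlt s R1 -> Rlt R0 t /\ Rlt t R1 ->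
                curveG e s <> curveG e' t.
Proof.
move=> e e' s t Hne [H1 H2] [H3 H4] [E1 E2]; subst t.
move: E1; case: (ord2_cases e) => Ee; case: (ord2_cases e') => Ee'; subst => //= E1; nra.
Qed.

Definition G : egraph := @EGraph gG posG curveG posG_inj loopG contG1 contG2 srcG tgtG injG avoidG disjG.

End P7.
Import P7.

Module P8.
Set Implicit Arguments. Unset Strict Implicit. Unset Printing Implicit Defensive.
Local Open Scope R_scope.

Definition o3_0 : 'I_3 := @Ordinal 3 0 isT.
Definition o3_1 : 'I_3 := @Ordinal 3 1 isT.
Definition o3_2 : 'I_3 := @Ordinal 3 2 isT.

Lemma ord3_cases (v : 'I_3) : [\/ v = o3_0, v = o3_1 | v = o3_2].
Proof.
case: v => [[|[|[|k]]] H]; [apply: Or31|apply: Or32|apply: Or33|by []]; exact: val_inj.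
Qed.

(* Triangle: a=(0,0), b=(1,0), c=(0,1); edges ab, ac, bc *)
Definition srcH (e : 'I_3) : 'I_3 := if val e == 2%N then o3_1 else o3_0.
Definition tgtH (e : 'I_3) : 'I_3 := if val e == 0%N then o3_1 else o3_2.
Definition gH : graph := @Graph 'I_3 'I_3 srcH tgtH.
Definition pxH (v : 'I_3) : nat := if val v == 1%N then 1%N else 0%N.
Definition pyH (v : 'I_3) : nat := if val v == 2%N then 1%N else 0%N.
Definition posH (v : 'I_3) : (R * R)%type := (INR (pxH v), INR (pyH v)).
Definition curveH (e : 'I_3) (t : R) : (R * R)%type :=
  (INR (pxH (srcH e)) + t * (INR (pxH (tgtH e)) - INR (pxH (srcH e))),
   INR (pyH (srcH e)) + t * (INR (pyH (tgtH e)) - INR (pyH (srcH e)))).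

Ltac c3 v := case: (ord3_cases v) => ->.

Lemma posH_inj : forall v w : vert gH, posH v = posH w -> v = w.
Proof.
move=> v w [] /INR_eq E1 /INR_eq E2; move: E1 E2.
by c3 v; c3 w.
Qed.

Lemma loopH : forall e : edge gH, src e <> tgt e.
Proof. by move=> e; c3 e. Qed.

Lemma contH1 : forall e : edge gH, continuity (fun t => fst (curveH e t)).
Proof. move=> e; rewrite /curveH /=; reg. Qed.
Lemma contH2 : forall e : edge gH, continuity (fun t => snd (curveH e t)).
Proof. move=> e; rewrite /curveH /=; reg. Qed.
Lemma srcH_ : forall e : edge gH, curveH e R0 = posH (src e).
Proof. move=> e; rewrite /curveH /posH /=; f_equal; ring. Qed.
Lemma tgtH_ : forall e : edge gH, curveH e R1 = posH (tgt e).
Proof. move=> e; rewrite /curveH /posH /=; f_equal; ring. Qed.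
Lemma injH : forall e s t, Rle R0 s /\ Rle s R1 -> Rle R0 t /\ Rle t R1 ->
                curveH e s = curveH e t -> s = t.
Proof. move=> e s t _ _; rewrite /curveH; c3 e; rewrite /= => -[]; lra. Qed.
Lemma avoidH : forall (e : edge gH) t (v : vert gH), Rlt R0 t /\ Rlt t R1 -> curveH e t <> posH v.
Proof.
move=> e t v [H1 H2]; rewrite /curveH /posH; c3 e; c3 v; rewrite /= => -[]; lra.
Qed.
Lemma disjH : forall (e e' : edge gH) s t, e <> e' -> Rlt R0 s /\ Rlt s R1 -> Rlt R0 t /\ Rlt t R1 ->
                curveH e s <> curveH e' t.
Proof.
move=> e e' s t Hne [H1 H2] [H3 H4]; rewrite /curveH; move: Hne.
c3 e; c3 e'; rewrite /= => // _ [] ; lra.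
Qed.

Definition H : egraph := @EGraph gH posH curveH posH_inj loopH contH1 contH2 srcH_ tgtH_ injH avoidH disjH.

End P8.
Import P8.

Module P9.
Set Implicit Arguments. Unset Strict Implicit. Unset Printing Implicit Defensive.

Section Conc.
Variable G : graph.
Variable hl : vert G -> nat.
Variable K : nat.
Variable el : seq (edge G).
Definition elv (e : edge G) := maxn (hl (src e)) (hl (tgt e)).
Definition subl_c (i : nat) : cspace G :=
  @CSpace G (fun v => hl v <= i)%N (fun e => elv e <= i)%N pred0 pred0 false.
Definition suppair_c (i : nat) : cspace G :=
  @CSpace G predT predT (fun v => i <= hl v)%N (fun e => i <= minn (hl (src e)) (hl (tgt e)))%N false.
Definition fbquot_c (j : nat) : cspace G :=
  let t := (K - j)%N in
  @CSpace G predT predT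
    (fun v => (t <= hl v)%N || has (fun e => (t <= elv e)%N && ((src e == v) || (tgt e == v))) el)
    (fun e => t <= elv e)%N true.
Definition ext_c (p : nat) : cspace G :=
  if (p < K)%N then subl_c p else suppair_c (K.-1 - (p - K))%N.
Definition fb_c (p : nat) : cspace G :=
  if (p < K)%N then subl_c p else fbquot_c (p - K).+1.
End Conc.

Section Seq.
Variable G : egraph.
Variable h : vert G -> nat.
Variable K : nat.
Variable el : seq (edge G).
Hypothesis Hl : forall v, lvl v = h v.
Hypothesis Hn : nlev G = K.
Hypothesis Hel : enum (edge G) = el.

Lemma extseqE : extseq G = ext_c h K.
Proof.
have E : @lvl G = h by apply: functional_extensionality.
apply: functional_extensionality => p.
by rewrite /extseq /ext_c /subl /suppair /subl_c /suppair_c /elv /elvl Hn E.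
Qed.

Lemma fbseqE : fbseq G = fb_c h K el.
Proof.
have E : @lvl G = h by apply: functional_extensionality.
apply: functional_extensionality => p.
rewrite /fbseq /fb_c /subl /fbquot /subl_c /fbquot_c /elv /elvl Hn E.
case: (p < K)%N => //; congr CSpace.
apply: functional_extensionality => v; by rewrite exists_has Hel.
Qed.
End Seq.

End P9.
Import P9.

Module P10.
Set Implicit Arguments. Unset Strict Implicit. Unset Printing Implicit Defensive.

Definition hG (v : 'I_2) : nat := val v.
Definition elG : seq 'I_2 := [:: ord0; ord_max].
Definition vlG : seq (option 'I_2) := [:: None; Some ord0; Some ord_max].

Lemma enumI2 : enum 'I_2 = elG.
Proof. by apply: (inj_map val_inj); rewrite val_enum_ord. Qed.
Lemma enumO2 : enum {: option 'I_2} = vlG.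
Proof. by rewrite enum_opt enumI2. Qed.

Lemma lvlG (v : vert G) : lvl v = hG v.
Proof.
apply: (@lvlE G hG 2) => // [w|y Hy]; first exact: ltn_ord.
by exists (Ordinal Hy).
Qed.
Lemma nlevG : nlev G = 2%N.
Proof.
apply: (@nlevE G hG 2) => // [w|y Hy]; first exact: ltn_ord.
by exists (Ordinal Hy).
Qed.
Lemma d0G : Defs.d0 G = 3%N. Proof. by rewrite /Defs.d0 card_option card_ord. Qed.
Lemma d1G : Defs.d1 G = 2%N. Proof. by rewrite /Defs.d1 card_ord. Qed.

Definition hH (v : 'I_3) : nat := pyH v.
Definition elH : seq 'I_3 := [:: o3_0; o3_1; o3_2].
Definition vlH : seq (option 'I_3) := [:: None; Some o3_0; Some o3_1; Some o3_2].
Lemma enumI3 : enum 'I_3 = elH.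
Proof. by apply: (inj_map val_inj); rewrite val_enum_ord. Qed.
Lemma enumO3 : enum {: option 'I_3} = vlH.
Proof. by rewrite enum_opt enumI3. Qed.
Lemma hH_lt (w : 'I_3) : (hH w < 2)%N.
Proof. by rewrite /hH /pyH; case: ifP. Qed.
Lemma hH_surj y : (y < 2)%N -> exists v, hH v = y.
Proof. by case: y => [|[|]] // _; [exists o3_0|exists o3_2]. Qed.
Lemma lvlH (v : vert H) : lvl v = hH v.
Proof. apply: (@lvlE H hH 2) => //; [exact: hH_lt|exact: hH_surj]. Qed.
Lemma nlevH : nlev H = 2%N.
Proof. apply: (@nlevE H hH 2) => //; [exact: hH_lt|exact: hH_surj]. Qed.
Lemma d0H : Defs.d0 H = 4%N. Proof. by rewrite /Defs.d0 card_option card_ord. Qed.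
Lemma d1H : Defs.d1 H = 3%N. Proof. by rewrite /Defs.d1 card_ord. Qed.

Definition SG := ext_c (G:=gG) hG 2.
Definition SH := ext_c (G:=gH) hH 2.
Definition FG := fb_c (G:=gG) hG 2 elG.
Definition FH := fb_c (G:=gH) hH 2 elH.


Lemma cdgm_out (Gr : graph) vl vs el e0 n0 n1 N S k b e :
  ~~ (b <= e <= N)%N -> @cdgm Gr vl vs el e0 n0 n1 N S k b e = 0.
Proof. by move=> /negbTE Hn; rewrite /cdgm; case: (k == 0%N); rewrite /pdiag Hn. Qed.

Lemma EP_eq k b d : (k <= 1)%N -> EPdgm G k b d = EPdgm H k b d.
Proof.
move=> Hk.
rewrite /EPdgm (extseqE lvlG nlevG) (extseqE lvlH nlevH) nlevG nlevH.
rewrite (dgmE (G := gG) (vl := vlG) (vs := elG) (el := elG) ord0 d0G d1G enumO2 enumI2 enumI2).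
rewrite (dgmE (G := gH) (vl := vlH) (vs := elH) (el := elH) o3_0 d0H d1H enumO3 enumI3 enumI3).
have Hc : all (fun k => all (fun b => all (fun e =>
   @cdgm gG vlG elG elG ord0 3 2 3 (ext_c (G:=gG) hG 2) k b e == @cdgm gH vlH elH elH o3_0 4 3 3 (ext_c (G:=gH) hH 2) k b e)
   (iota 0 4)) (iota 0 4)) (iota 0 2) by vm_compute.
have N3 : (2.*2.-1 = 3)%N by [].
rewrite N3.
case: (leqP b 3) => Hb; last first.
  have Hn : ~~ (b <= d <= 3)%N.
    by apply/negP => /andP [H1 H2]; move: (leq_trans H1 H2); rewrite leqNgt Hb.
  by rewrite !cdgm_out.
case: (leqP d 3) => Hd; last first.
  have Hn : ~~ (b <= d <= 3)%N by rewrite [(d <= 3)%N]leqNgt Hd andbF.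
  by rewrite !cdgm_out.
apply/eqP.
have /allP /(_ k) := Hc; rewrite mem_iota add0n ltnS => /(_ Hk) /allP /(_ b).
rewrite mem_iota add0n ltnS => /(_ Hb) /allP /(_ d).
by rewrite mem_iota add0n ltnS => /(_ Hd).
Qed.

Lemma FB_neq : FBdgm G 1 1 1 <> FBdgm H 1 1 1.
Proof.
rewrite /FBdgm (fbseqE lvlG nlevG enumI2) (fbseqE lvlH nlevH enumI3) nlevG nlevH.
rewrite (dgmE (G := gG) (vl := vlG) (vs := elG) (el := elG) ord0 d0G d1G enumO2 enumI2 enumI2).
rewrite (dgmE (G := gH) (vl := vlH) (vs := elH) (el := elH) o3_0 d0H d1H enumO3 enumI3 enumI3).
by apply/eqP; vm_compute.
Qed.


End P10.
Import P10.

Theorem proposition5 :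
  exists G H : egraph,
    (exists k b d : nat, (k <= 1)%N /\ FBdgm G k b d <> FBdgm H k b d) /\
    (forall k b d : nat, (k <= 1)%N -> EPdgm G k b d = EPdgm H k b d).
Proof.
exists G, H; split; last exact: EP_eq.
by exists 1%N, 1%N, 1%N; split => //; exact: FB_neq.
Qed.
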